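(* Let $k,d\in\mathbb{N}$ with $0<k<d$, let $\mathcal{H}\in\bar{\mathbb{Q}}\cap[1,\infty)$, let $K$ be the normal closure of $\mathbb{Q}(\mathcal{H}^d)$, and let $\alpha\in A(k,d,\mathcal{H})$. Then $[K(\alpha):K]$ divides $\gcd(k,d)$. Furthermore, if $\alpha_1,\dots,\alpha_d$ are the conjugates of $\alpha$, numbered so that $|\alpha_i|\ge1$ if and only if $1\le i\le d-k$, then every $\sigma\in\mathrm{Gal}(\bar{\mathbb{Q}}/\mathbb{Q})$ with $\sigma(\mathcal{H}^d)=\mathcal{H}^d$ satisfies $\sigma(\{\alpha_1,\dots,\alpha_{d-k}\})=\{\alpha_1,\dots,\alpha_{d-k}\}$.
   Context: $\bar{\mathbb{Q}}$ is the algebraic closure of $\mathbb{Q}$ in $\mathbb{C}$. For algebraic $\alpha$ of degree $d$, with $a_0>0$ the leading coefficient of a minimal polynomial of $\alpha$ in $\mathbb{Z}[t]$ and conjugates $\alpha_1,\dots,\alpha_d$, $H(\alpha)=\big(a_0\prod_i\max\{1,|\alpha_i|\}\big)^{1/d}$ (absolute multiplicative Weil height). $A(k,d,\mathcal{H})=\{\alpha\in\mathbb{C}: [\mathbb{Q}(\alpha):\mathbb{Q}]=d,\ H(\alpha)=\mathcal{H},$ precisely $k$ conjugates of $\alpha$ in the open unit disk$\}$. *)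

(* Defs.v *)
(* algebraic numbers are modelled by mathcomp's algC
   (the algebraic closure of Q with complex conjugation, norm and the
   partial order of C), i.e. \bar{Q} inside C. *)
From HB Require Import structures.
From mathcomp Require Import all_boot all_order all_algebra all_field.
Set Implicit Arguments. Unset Strict Implicit. Unset Printing Implicit Defensive.
Import Order.TTheory GRing.Theory Num.Theory.
Local Open Scope ring_scope.

Definition alg_deg (a : algC) : nat := (size (minCpoly a)).-1.

(* the conjugates a_1,...,a_d of a : the roots of its minimal polynomial *)
Definition conjugates (a : algC) : seq algC :=
  sval (closed_field_poly_normal (minCpoly a)).

(* p is "the" minimal polynomial of a in Z[t] with positive leading
   coefficient: primitive (content 1, which also forces lead_coef p > 0,
   since zcontents carries the sign of the leading coefficient) and
   proportional to the monic minimal polynomial of a over Q. *)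
Definition is_Zminpoly (a : algC) (p : {poly int}) : Prop :=
  zcontents p = 1 /\ map_poly intr p = (lead_coef p)%:~R *: minCpoly a.

Definition weil_height (a h : algC) : Prop :=
  exists p : {poly int}, is_Zminpoly a p /\
    h = (alg_deg a).-root
          ((lead_coef p)%:~R * \prod_(z <- conjugates a) Num.max 1 `|z|).

Definition in_A (k d : nat) (H a : algC) : Prop :=
  alg_deg a = d /\ weil_height a H /\
  count (fun z : algC => `|z| < 1) (conjugates a) = k.

Definition is_subfield (S : algC -> Prop) : Prop :=
  S 0 /\ S 1 /\ (forall x y, S x -> S y -> S (x - y)) /\
  (forall x y, S x -> S y -> S (x * y)) /\ (forall x, S x -> S x^-1).

Definition normal_closure (b : algC) : algC -> Prop :=
  fun x => forall S : algC -> Prop, is_subfield S ->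
    (forall z, root (minCpoly b) z -> S z) -> S x.

Definition degree_over (K : algC -> Prop) (a : algC) (n : nat) : Prop :=
  (exists p : {poly algC}, p \is monic /\ (forall i, K p`_i) /\
      root p a /\ size p = n.+1) /\
  (forall p : {poly algC}, p != 0 -> (forall i, K p`_i) -> root p a ->
      (n.+1 <= size p)%N).

(* Main.v *)
Require Import Defs.
From HB Require Import structures.
From mathcomp Require Import all_boot all_order all_algebra all_field zify.
From Stdlib Require Import ClassicalEpsilon.
Import Order.TTheory GRing.Theory Num.Theory.
Local Open Scope ring_scope.
Set Implicit Arguments. Unset Strict Implicit.

Definition pb (P : Prop) : bool :=
  if excluded_middle_informative P then true else false.
Lemma pbP (P : Prop) : reflect P (pb P).
Proof. by rewrite /pb; case: excluded_middle_informative => h; constructor. Qed.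


Section Subfield.
Variable S : algC -> Prop.
Hypothesis hS : is_subfield S.

Lemma sf0 : S 0. Proof. by case: hS => h _. Qed.
Lemma sf1 : S 1. Proof. by case: hS => _ [h _]. Qed.
Lemma sfB x y : S x -> S y -> S (x - y). Proof. by case: hS => _ [_ [h _]]; apply: h. Qed.
Lemma sfM x y : S x -> S y -> S (x * y). Proof. by case: hS => _ [_ [_ [h _]]]; apply: h. Qed.
Lemma sfV x : S x -> S x^-1. Proof. by case: hS => _ [_ [_ [_ h]]]; apply: h. Qed.
Lemma sfN x : S x -> S (- x). Proof. by move=> h; rewrite -sub0r; apply: sfB => //; apply: sf0. Qed.
Lemma sfD x y : S x -> S y -> S (x + y).
Proof. by move=> hx hy; rewrite -[y]opprK; apply: sfB => //; apply: sfN. Qed.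
Lemma sfX x n : S x -> S (x ^+ n).
Proof. move=> hx; elim: n => [|n IH]; first by rewrite expr0; apply: sf1. by rewrite exprS; apply: sfM. Qed.
Lemma sfn n : S n%:R.
Proof. elim: n => [|n IH]; first exact: sf0. by rewrite -natr1; apply: sfD => //; apply: sf1. Qed.
Lemma sfz (z : int) : S z%:~R.
Proof. case: z => n; first exact: sfn. by rewrite NegzE rmorphN; apply: sfN; apply: sfn. Qed.
Lemma sfrat (r : rat) : S (ratr r).
Proof. by rewrite /ratr; apply: sfM; [apply: sfz | apply: sfV; apply: sfz]. Qed.
Lemma sf_sum (I : Type) (r : seq I) (F : I -> algC) :
  (forall i, S (F i)) -> S (\sum_(i <- r) F i).
Proof.
move=> hF; elim: r => [|i r IH]; first by rewrite big_nil; apply: sf0.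
by rewrite big_cons; apply: sfD.
Qed.
Lemma sf_horner (p : {poly algC}) x : (forall i, S p`_i) -> S x -> S p.[x].
Proof.
move=> hp hx; rewrite horner_coef; rewrite -(big_mkord xpredT (fun i => p`_i * x ^+ i)).
by apply: sf_sum => i; apply: sfM => //; apply: sfX.
Qed.
End Subfield.

Lemma NC_subfield b : is_subfield (normal_closure b).
Proof.
split; first by move=> S hS _; apply: sf0.
split; first by move=> S hS _; apply: sf1.
split; first by move=> x y hx hy S hS hr; apply: sfB => //; [apply: hx | apply: hy].
split; first by move=> x y hx hy S hS hr; apply: sfM => //; [apply: hx | apply: hy].
by move=> x hx S hS hr; apply: sfV => //; apply: hx.
Qed.

Lemma NC_root b z : root (minCpoly b) z -> normal_closure b z.
Proof. by move=> hz S _ hr; apply: hr. Qed.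

Lemma fix_subfield (s : {rmorphism algC -> algC}) : is_subfield (fun x => s x = x).
Proof.
split; first exact: rmorph0. split; first exact: rmorph1.
split; first by move=> x y hx hy; rewrite rmorphB hx hy.
split; first by move=> x y hx hy; rewrite rmorphM hx hy.
by move=> x hx; rewrite fmorphV hx.
Qed.

Lemma map_minC (s : {rmorphism algC -> algC}) x : map_poly s (minCpoly x) = minCpoly x.
Proof.
have [q [-> _] _] := minCpolyP x.
by rewrite -map_poly_comp; apply: eq_map_poly => r /=; rewrite fmorph_rat.
Qed.

Lemma aut_root (s : {rmorphism algC -> algC}) x z :
  root (minCpoly x) z -> root (minCpoly x) (s z).
Proof. by rewrite -{2}(map_minC s x) fmorph_root. Qed.

Lemma mapLC (L : fieldExtType rat) (LC : {rmorphism L -> algC}) (q : {poly rat}) :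
  map_poly LC (map_poly (in_alg L) q) = map_poly ratr q.
Proof.
by rewrite -map_poly_comp; apply: eq_map_poly => a /=; rewrite alg_num_field fmorph_rat.
Qed.

Lemma NF (r : seq algC) (q : {poly rat}) :
  map_poly ratr q = \prod_(z <- r) ('X - z%:P) ->
  exists L : splittingFieldType rat, exists LC : {rmorphism L -> algC},
  exists rr : seq L, map LC rr = r.
Proof.
move=> Dq.
have [Qs [QsC [s1 Ds1 gen]]] := num_field_exists r.
have ax : splitting_field_axiom Qs.
  exists (map_poly (in_alg Qs) q); first by apply/polyOver1P; exists q.
  exists s1 => //.
  suff -> : map_poly (in_alg Qs) q = \prod_(z <- s1) ('X - z%:P) by apply: eqpxx.
  apply: (@map_poly_inj _ _ QsC); rewrite mapLC Dq rmorph_prod -Ds1 big_map.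
  apply: eq_bigr => z _ /=; by rewrite map_polyXsubC.
pose L : splittingFieldType rat :=
  HB.pack_for (splittingFieldType rat) Qs (FieldExt_isSplittingField.Build rat Qs ax).
by exists L, QsC, s1.
Qed.

Lemma link (L : splittingFieldType rat) (LC : {rmorphism L -> algC}) (x' : L) :
  map_poly LC (minPoly 1%AS x') = minCpoly (LC x').
Proof.
have [q [Dq mq] minq] := minCpolyP (LC x').
have /polyOver1P[q' Dq'] := minPolyOver 1%AS x'.
rewrite Dq' mapLC Dq; congr (map_poly ratr _).
have mq' : q' \is monic by rewrite -(map_monic (in_alg L)) -Dq' monic_minPoly.
apply/eqP; rewrite -eqp_monic //; apply/andP; split.
  rewrite -(dvdp_map (in_alg L)) -Dq'; apply: minPoly_dvdp.
    by apply/polyOver1P; exists q.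
  by rewrite -(fmorph_root LC) mapLC -Dq root_minCpoly.
by rewrite -minq -(mapLC LC) -Dq' fmorph_root root_minPoly.
Qed.

Lemma char0L (L : fieldExtType rat) : has_char0 L.
Proof. by move=> p; rewrite pchar_lalg; apply: pchar_num. Qed.

Lemma minC_split x : exists r, minCpoly x = \prod_(z <- r) ('X - z%:P).
Proof.
have [r Dr] := closed_field_poly_normal (minCpoly x).
by exists r; rewrite Dr (monicP (minCpoly_monic x)) scale1r.
Qed.

Lemma minC_NF x : exists L : splittingFieldType rat, exists LC : {rmorphism L -> algC},
  exists rr : seq L, forall z, root (minCpoly x) z -> exists2 z', z' \in rr & LC z' = z.
Proof.
have [r Dr] := minC_split x.
have [q [Dq _] _] := minCpolyP x.
have [L [LC [rr Drr]]] := NF (q := q) (r := r) (etrans (esym Dq) Dr).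
exists L, LC, rr => z; rewrite Dr root_prod_XsubC -Drr => /mapP[z' z'r ->].
by exists z'.
Qed.

Lemma minC_sep x s : minCpoly x = \prod_(z <- s) ('X - z%:P) -> uniq s.
Proof.
move=> Ds; have [L [LC [rr hrr]]] := minC_NF x.
have [x' _ Dx] := hrr x (root_minCpoly x).
rewrite -separable_prod_XsubC -Ds -Dx -(link LC x') separable_map.
exact: (pcharf0_separable 1%AS (@char0L L)).
Qed.

Lemma aut_trans x y : root (minCpoly x) y ->
  exists s : {rmorphism algC -> algC}, s x = y.
Proof.
move=> ry; have [L [LC [rr hrr]]] := minC_NF x.
have [x' _ Dx] := hrr x (root_minCpoly x).
have [y' _ Dy] := hrr y ry.
have r' : root (minPoly 1%AS x') y' by rewrite -(fmorph_root LC) link Dx Dy.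
have [phi _ phix] := normalField_root_minPoly (sub1v _) (normalFieldf 1%AS) (memvf x') r'.
have [nu Dnu] := @extend_algC_subfield_aut L LC ((phi : 'AEnd(L)) : {rmorphism L -> L}).
by exists nu; rewrite -Dx -Dnu /= phix Dy.
Qed.

Lemma adjoin_in (L : fieldExtType rat) (LC : {rmorphism L -> algC})
  (S : algC -> Prop) (hS : is_subfield S) (l : seq L) :
  (forall y, y \in l -> S (LC y)) -> forall y, y \in <<1%AS & l>>%VS -> S (LC y).
Proof.
elim/last_ind: l => [|l z IH] hl y.
  rewrite Fadjoin_nil => /vlineP[a ->].
  by rewrite rmorphZ_num rmorph1 mulr1; apply: sfrat.
rewrite adjoin_rcons => yin.
rewrite -(Fadjoin_poly_eq yin) -horner_map; apply: sf_horner => //.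
  move=> i; rewrite coef_map /=; apply: IH.
    by move=> w wl; apply: hl; rewrite mem_rcons in_cons wl orbT.
  by apply: (polyOverP (Fadjoin_polyOver _ _ _)).
by apply: hl; rewrite mem_rcons mem_head.
Qed.

Lemma fix_in_NC c x :
  (forall s : {rmorphism algC -> algC},
     (forall z, root (minCpoly c) z -> s z = z) -> s x = x) ->
  normal_closure c x.
Proof.
move=> hfix.
have [q1 [Dq1 _] _] := minCpolyP c; have [q2 [Dq2 _] _] := minCpolyP x.
have [r Dr] := closed_field_poly_normal (minCpoly c * minCpoly x).
have mcx : minCpoly c * minCpoly x \is monic by rewrite monicMl ?minCpoly_monic.
rewrite (monicP mcx) scale1r in Dr.
have Dq : map_poly ratr (q1 * q2) = \prod_(z <- r) ('X - z%:P).
  by rewrite rmorphM /= -Dq1 -Dq2.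
have [L [LC [rr Drr]]] := NF Dq.
have inr z : root (minCpoly c) z || root (minCpoly x) z ->
    exists2 z', z' \in rr & LC z' = z.
  by rewrite -rootM Dr root_prod_XsubC -Drr => /mapP[z' z'r ->]; exists z'.
have [x' _ Dx] := inr x (introT orP (or_intror (root_minCpoly x))).
pose rg := [seq y <- rr | root (minCpoly c) (LC y)].
pose E := <<1%AS & rg>>%AS.
have galE : galois E fullv.
  rewrite /galois subvf normalFieldf andbT.
  by apply/separableP => y _; apply: (pcharf0_separable _ (@char0L L)).
have : x' \in fixedField ('Gal(fullv / E))%g.
  apply/fixedFieldP; first exact: memvf.
  move=> phi phiG.
  have [nu Dnu] := @extend_algC_subfield_aut L LC ((phi : 'AEnd(L)) : {rmorphism L -> L}).
  have Gnu : forall z, root (minCpoly c) z -> nu z = z.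
    move=> z rz; have [z' z'r Dz] := inr z (introT orP (or_introl rz)).
    rewrite -Dz -Dnu /=; congr (LC _); apply: (fixed_gal (subvf E) phiG).
    by apply: seqv_sub_adjoin; rewrite mem_filter Dz rz z'r.
  by apply: (fmorph_inj LC); rewrite Dnu /= Dx hfix.
move/galois_fixedField: galE => -> x'E.
rewrite -Dx; apply: (adjoin_in (NC_subfield c) _ x'E).
by move=> y; rewrite mem_filter => /andP[ry _]; apply: NC_root.
Qed.

Lemma max1a (w : algC) : 1 <= `|w| -> Num.max 1 `|w| = `|w|.
Proof.
move=> h; rewrite /Num.max /Order.max; case: ifP => // /negbT.
by rewrite lt_neqAle h andbT negbK => /eqP.
Qed.

Lemma max1b (w : algC) : ~~ (1 <= `|w|) -> Num.max 1 `|w| = 1.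
Proof. by move=> h; rewrite /Num.max /Order.max ifF //; apply: contraNF h => /ltW. Qed.

Lemma lt1N (w : algC) : ~~ (1 <= `|w|) -> `|w| < 1.
Proof. by rewrite real_ltNge ?real1 ?normr_real. Qed.

Lemma prod_ge1 (I : Type) (r : seq I) (P : pred I) (F : I -> algC) :
  (forall i, P i -> 1 <= F i) -> 1 <= \prod_(i <- r | P i) F i.
Proof.
move=> h; apply: (big_ind (fun x => 1 <= x)) => //; exact: mulr_ege1.
Qed.

Lemma SI (s U : seq algC) : uniq s -> uniq U -> {subset U <= s} ->
  (exists2 w, w \in U & `|w| < 1) ->
  \prod_(w <- U) `|w| < \prod_(w <- [seq w <- s | 1 <= `|w|]) `|w|.
Proof.
move=> us uU sUs [w0 w0U w0lt].
set T := [seq w <- s | 1 <= `|w|].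
rewrite (bigID (fun w => 1 <= `|w|)) /=.
set A := \prod_(w <- U | 1 <= `|w|) `|w|.
set B := \prod_(w <- U | ~~ (1 <= `|w|)) `|w|.
have A1 : 1 <= A by apply: prod_ge1.
have A0 : 0 < A by apply: lt_le_trans A1.
have AT : A <= \prod_(w <- T) `|w|.
  rewrite [X in _ <= X](bigID (fun w => w \in U)) /=.
  have -> : \prod_(w <- T | w \in U) `|w| = A.
    rewrite /A -[LHS]big_filter -[RHS]big_filter; apply: perm_big.
    apply: uniq_perm; rewrite ?filter_uniq //.
    move=> w; rewrite !mem_filter; case wU: (w \in U); rewrite ?andbF //=.
    by rewrite (sUs _ wU) andbT.
  apply: ler_peMr; first exact: ltW.
  by rewrite big_filter_cond; apply: prod_ge1 => w /andP[].
have B1 : B < 1.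
  rewrite /B -big_filter (bigD1_seq w0) /=; last by rewrite filter_uniq.
    apply: (le_lt_trans _ w0lt); apply: ler_piMr; first exact: normr_ge0.
    rewrite big_seq_cond; apply: prodr_ile1 => w /andP[]; rewrite mem_filter => /andP[h _] _.
    by rewrite normr_ge0 /= ltW // lt1N.
  by rewrite mem_filter w0U andbT (lt_geF w0lt).
apply: lt_le_trans AT; by rewrite gtr_pMr.
Qed.

Lemma aut_in (s : seq algC) a (sg : {rmorphism algC -> algC}) :
  minCpoly a = \prod_(z <- s) ('X - z%:P) -> forall w, w \in s -> sg w \in s.
Proof. by move=> Ds w; rewrite -!root_prod_XsubC -Ds; apply: aut_root. Qed.

Lemma out_stable a (s : seq algC) (lc : int) (c : algC) (sg : {rmorphism algC -> algC}) :
  minCpoly a = \prod_(z <- s) ('X - z%:P) -> lc != 0 -> 0 <= c ->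
  c = lc%:~R * \prod_(z <- s) Num.max 1 `|z| -> sg c = c ->
  forall z, z \in s -> 1 <= `|z| -> 1 <= `|sg z|.
Proof.
move=> Ds lc0 c0 Dc sc z zs z1.
have us := minC_sep Ds.
set T := [seq w <- s | 1 <= `|w|].
have uT : uniq T by rewrite filter_uniq.
have Dmax : \prod_(w <- s) Num.max 1 `|w| = \prod_(w <- T) `|w|.
  rewrite big_filter (bigID (fun w => 1 <= `|w|)) /=.
  rewrite [X in _ * X]big1 ?mulr1; last by move=> w /max1b.
  by apply: eq_bigr => w /max1a.
set P := \prod_(w <- T) w.
have normP : `|P| = \prod_(w <- T) `|w| by rewrite normr_prod.
have Preal : P \is Num.real.
  rewrite CrealE /P rmorph_prod /=.
  rewrite -(big_map (fun w => w^*) xpredT (fun w => w)); apply/eqP/perm_big.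
  have uM : uniq (map (fun w => w^*) T).
    by rewrite map_inj_uniq // => x y; apply: (fmorph_inj (Num.conj_op)).
  have sub : {subset map (fun w => w^*) T <= T}.
    move=> w /mapP[v]; rewrite mem_filter => /andP[v1 vs] ->.
    rewrite mem_filter norm_conjC v1 /=.
    exact: (aut_in (Num.conj_op) Ds vs).
  have [_ eqT] := uniq_min_size uM sub (eq_leq (esym (size_map _ _))).
  exact: uniq_perm uM uT eqT.
have Dc2 : c = lc%:~R * `|P| by rewrite Dc Dmax normP.
have key : \prod_(w <- map sg T) `|w| = \prod_(w <- T) `|w|.
  have e1 : `|sg c| = `|lc%:~R : algC| * \prod_(w <- map sg T) `|w|.
    rewrite {1}Dc2 rmorphM rmorph_int (real_normrEsign Preal) rmorphM rmorph_sign /=.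
    by rewrite !normrM normr_sign mul1r /P rmorph_prod normr_prod big_map.
  have e2 : `|c| = `|lc%:~R : algC| * \prod_(w <- T) `|w|.
    by rewrite Dc2 normrM normr_id normP.
  have nz : `|lc%:~R : algC| != 0 by rewrite normr_eq0 intr_eq0.
  by move: e1; rewrite sc e2 => /(mulfI nz).
case h1 : (1 <= `|sg z|) => //.
have : \prod_(w <- map sg T) `|w| < \prod_(w <- T) `|w|.
  apply: SI => //.
    by rewrite map_inj_uniq //; apply: fmorph_inj.
    by move=> w /mapP[v]; rewrite mem_filter => /andP[_ vs] ->; apply: (aut_in sg Ds).
  exists (sg z); first by apply: map_f; rewrite mem_filter z1 zs.
  by rewrite lt1N ?h1.
by rewrite key ltxx.
Qed.

Definition Gc c (sg : {rmorphism algC -> algC}) :=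
  forall z, root (minCpoly c) z -> sg z = z.
Definition Rc c (x y : algC) :=
  exists sg : {rmorphism algC -> algC}, Gc c sg /\ sg x = y.
Definition orb c (s : seq algC) x := [seq y <- s | pb (Rc c x y)].

Lemma Gc_comp c (sg rh : {rmorphism algC -> algC}) : Gc c sg -> Gc c rh -> Gc c (sg \o rh).
Proof. by move=> hs hr z rz /=; rewrite hr // hs. Qed.

Lemma Gc_inv c (sg : {rmorphism algC -> algC}) : Gc c sg -> Gc c (algC_invaut sg).
Proof. move=> hs z rz. transitivity (algC_invaut sg (sg z)); first by rewrite hs. exact: algC_autK. Qed.

Lemma Gc_conj c (tau sg : {rmorphism algC -> algC}) : Gc c sg -> Gc c (tau \o sg \o algC_invaut tau).
Proof.
move=> hs z rz /=; rewrite hs ?algC_invautK //.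
by apply: aut_root.
Qed.

Lemma R_refl c x : Rc c x x.
Proof. by exists idfun. Qed.

Lemma R_sym c x y : Rc c x y -> Rc c y x.
Proof.
case=> sg [hs <-]; exists (algC_invaut sg); split; first exact: Gc_inv.
exact: algC_autK.
Qed.

Lemma R_trans c x y w : Rc c x y -> Rc c y w -> Rc c x w.
Proof.
case=> sg [hs <-] [rh [hr <-]]; exists (rh \o sg); split => //.
exact: Gc_comp.
Qed.

Section Orbits.
Variables (c a : algC) (s : seq algC).
Hypothesis Ds : minCpoly a = \prod_(z <- s) ('X - z%:P).

Lemma us : uniq s. Proof. exact: minC_sep Ds. Qed.

Lemma orb_uniq x : uniq (orb c s x). Proof. by rewrite filter_uniq // us. Qed.

Lemma orb_le (tau : {rmorphism algC -> algC}) x y :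
  tau x = y -> (size (orb c s x) <= size (orb c s y))%N.
Proof.
move=> Dy.
have u := orb_uniq x.
rewrite -(size_map tau); apply: uniq_leq_size.
  by rewrite map_inj_uniq //; apply: fmorph_inj.
move=> w /mapP[v]; rewrite mem_filter => /andP[/pbP [sg [hs Dv]] vs] ->.
rewrite mem_filter (aut_in tau Ds vs) andbT; apply/pbP.
exists (tau \o sg \o algC_invaut tau); split; first exact: Gc_conj.
rewrite /= -Dy -Dv; congr (tau (sg _)); exact: algC_autK.
Qed.

Lemma orb_size b : b \in s -> size (orb c s b) = size (orb c s a).
Proof.
move=> bs; have rb : root (minCpoly a) b by rewrite Ds root_prod_XsubC.
have [tau Dt] := aut_trans rb.
apply/eqP; rewrite eqn_leq (orb_le Dt) andbT.
by apply: (orb_le (tau := algC_invaut tau)); rewrite -Dt; exact: algC_autK.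
Qed.

Lemma a_in_s : a \in s.
Proof. by rewrite -root_prod_XsubC -Ds root_minCpoly. Qed.

Lemma a_in_orb : a \in orb c s a.
Proof. by rewrite mem_filter a_in_s andbT; apply/pbP; apply: R_refl. Qed.

Lemma DIV (P : pred algC) :
  (forall x y, x \in s -> P x -> Rc c x y -> P y) ->
  (size (orb c s a) %| count P s)%N.
Proof.
have n0 : (0 < size (orb c s a))%N by have := a_in_orb; case: (orb c s a).
move: {2}(count P s) (leqnn (count P s)) => m.
elim: m P => [|m IH] P hm hcl.
  by move: hm; rewrite leqn0 => /eqP ->; apply: dvdn0.
case: (boolP (has P s)) => [/hasP[b bs Pb]|]; last first.
  by rewrite has_count -leqNgt leqn0 => /eqP ->; apply: dvdn0.
pose Q := fun y => pb (Rc c b y).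
have split : count P s = count (predI Q P) s + count (predI (predC Q) P) s.
  by rewrite -size_filter -(count_predC Q) !count_filter.
have eQ : count (predI Q P) s = size (orb c s a).
  rewrite -(orb_size bs) size_filter; apply: eq_in_count => y ys /=.
  case Qy: (Q y) => //=; rewrite /Q in Qy; rewrite Qy; apply: (hcl b) => //; exact/pbP.
rewrite split eQ dvdn_addr //; apply: IH.
  move: hm; rewrite split eQ; lia.
move=> x y xs /andP[/negP nQx Px] Rxy; apply/andP; split; last exact: (hcl x).
apply/negP => /pbP Rby; apply: nQx; apply/pbP.
exact: R_trans Rby (R_sym Rxy).
Qed.

End Orbits.

Unset Implicit Arguments. Set Strict Implicit.

Theorem lemma5p1 (k d : nat) (H a : algC) :
  (0 < k)%N -> (k < d)%N -> 1 <= H -> in_A k d H a ->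
  (exists n : nat,
      degree_over (normal_closure (H ^+ d)) a n /\ (n %| gcdn k d)%N) /\
  (forall s : seq algC,
      minCpoly a = \prod_(z <- s) ('X - z%:P) ->
      (forall i : nat, (i < d)%N -> (1 <= `|s`_i|) = (i < d - k)%N) ->
      forall sigma : {rmorphism algC -> algC},
        sigma (H ^+ d) = H ^+ d ->
        [seq sigma z | z <- take (d - k) s] =i take (d - k) s).
Proof.
move=> k0 kd H1 [dega [[p [[zc Dp] DH]] cnt]].
set c := H ^+ d.
set s := conjugates a.
have Ds : minCpoly a = \prod_(z <- s) ('X - z%:P).
  rewrite /s /conjugates; case: (closed_field_poly_normal _) => r /= Dr.
  by rewrite {1}Dr (monicP (minCpoly_monic a)) scale1r.
have sz : size s = d.
  by move: dega; rewrite /alg_deg Ds size_prod_XsubC.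
have d0 : (0 < d)%N by apply: leq_ltn_trans kd.
have lc0 : lead_coef p != 0 by rewrite -sgz_eq0 -sgz_contents zc.
have c0 : 0 <= c by rewrite /c exprn_ge0 // (le_trans ler01 H1).
have Dc : c = (lead_coef p)%:~R * \prod_(z <- s) Num.max 1 `|z|.
  by rewrite /c DH dega rootCK.
have KS : forall sg : {rmorphism algC -> algC}, sg c = c ->
    forall z, z \in s -> 1 <= `|z| -> 1 <= `|sg z|.
  by move=> sg sgc; apply: (out_stable Ds lc0 c0 Dc sgc).
split; last first.
  move=> t Dt ht sg sgc.
  have ut := minC_sep Dt.
  have szt : size t = d by rewrite -sz; apply: perm_size; apply: prod_XsubC_eq; rewrite -Dt -Ds.
  have memts : t =i s by apply: perm_mem; apply: prod_XsubC_eq; rewrite -Dt -Ds.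
  set Tk := take (d - k) t.
  have memT w : (w \in Tk) = (w \in t) && (1 <= `|w|).
    case wt: (w \in t); last by apply/negbTE; apply: contraFN wt; apply: mem_take.
    rewrite /Tk (in_take _ wt) /=.
    have id : (index w t < d)%N by rewrite -szt index_mem.
    by rewrite -(ht _ id) (nth_index 0 wt).
  have uM : uniq [seq sg z | z <- Tk].
    by rewrite map_inj_uniq ?take_uniq //; apply: fmorph_inj.
  have sub : {subset [seq sg z | z <- Tk] <= Tk}.
    move=> w /mapP[v]; rewrite memT => /andP[vt v1] ->.
    rewrite memT (aut_in sg Dt vt) /=.
    by apply: KS => //; rewrite -memts.
  by case: (uniq_min_size uM sub (eq_leq (esym (size_map _ _)))).
pose n := size (orb c s a).
have hd : (n %| d)%N.
  have := @DIV c a s Ds (@predT algC); rewrite count_predT sz; apply; done.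
have cnt2 : count (fun z => 1 <= `|z|) s = (d - k)%N.
  have e1 := count_predC (fun z : algC => 1 <= `|z|) s.
  have e2 : count (predC (fun z : algC => 1 <= `|z|)) s = k.
    rewrite -cnt; apply: eq_count => z /=.
    case h: (1 <= `|z|) => /=; first by rewrite le_gtF.
    by rewrite lt1N ?h.
  move: e1; rewrite e2 sz => e1; by rewrite -e1 addnK.
have hdk : (n %| d - k)%N.
  rewrite -cnt2; apply: (@DIV c a s Ds) => x y xs Px [sg [Gsg <-]].
  exact: (KS sg (Gsg c (root_minCpoly c)) x xs Px).
have hk : (n %| k)%N.
  have -> : k = (d - (d - k))%N by lia.
  by rewrite dvdn_sub.
exists n; split; last by rewrite dvdn_gcd hk hd.
split.
  exists (\prod_(z <- orb c s a) ('X - z%:P)).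
  split; first exact: monic_prod_XsubC.
  split.
    move=> i; apply: fix_in_NC => sg Gsg.
    have e : map_poly sg (\prod_(z <- orb c s a) ('X - z%:P)) =
             \prod_(z <- orb c s a) ('X - z%:P).
      transitivity (\prod_(z <- map sg (orb c s a)) ('X - z%:P)).
        by rewrite big_map rmorph_prod; apply: eq_bigr => z _ /=; rewrite map_polyXsubC.
      apply: perm_big.
      have uM : uniq (map sg (orb c s a)).
        rewrite map_inj_uniq; [exact: (orb_uniq c Ds) | exact: fmorph_inj].
      apply: uniq_perm => //; first exact: (orb_uniq c Ds).
      have sub : {subset map sg (orb c s a) <= orb c s a}.
        move=> w /mapP[v]; rewrite mem_filter => /andP[/pbP[rho [hr Dv]] vs] ->.
        rewrite mem_filter (aut_in sg Ds vs) andbT; apply/pbP.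
        exists (sg \o rho); split; first exact: Gc_comp.
        by rewrite /= Dv.
      by case: (uniq_min_size uM sub (eq_leq (esym (size_map _ _)))).
    by rewrite -coef_map e.
  split; first by rewrite root_prod_XsubC (a_in_orb c Ds).
  by rewrite size_prod_XsubC.
move=> q q0 Kq rq.
have fixq (sg : {rmorphism algC -> algC}) : Gc c sg -> map_poly sg q = q.
  move=> Gsg; apply/polyP => i; rewrite coef_map /=.
  apply: (Kq i (fun x => sg x = x)); first exact: fix_subfield.
  by move=> z rz; apply: Gsg.
have allr : all (root q) (orb c s a).
  apply/allP => v; rewrite mem_filter => /andP[/pbP[sg [Gsg Dv]] _].
  by rewrite -Dv -(fixq sg Gsg) fmorph_root.
have := uniq_roots_dvdp allr; rewrite uniq_rootsE (orb_uniq c Ds) => /(_ isT).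
by move/(dvdp_leq q0); rewrite size_prod_XsubC.
Qed.
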